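(* Let $q$ be a prime power and $n\ge 1$. Fix an identification of the $3n$-dimensional $\mathrm{GF}(q)$-vector space $\mathrm{GF}(q)^{3n}$ underlying $\mathrm{PG}(3n-1,q)$ with $\mathrm{GF}(q^n)^3$ regarded as a $\mathrm{GF}(q)$-vector space. Let $\widehat{\mathcal O}_1$ and $\widehat{\mathcal O}_2$ be ovals of $\mathrm{PG}(2,q^n)$ and let $\mathcal O_1$, $\mathcal O_2$ be the elementary $n$-dimensional pseudo-ovals of $\mathrm{PG}(3n-1,q)$ arising from $\widehat{\mathcal O}_1$ and $\widehat{\mathcal O}_2$, respectively. Then $\mathcal O_1$ and $\mathcal O_2$ are projectively equivalent (i.e. some element of $\mathrm{P\Gamma L}(3n,q)$ maps $\mathcal O_1$ onto $\mathcal O_2$) if and only if $\widehat{\mathcal O}_1$ and $\widehat{\mathcal O}_2$ are projectively equivalent (i.e. some element of $\mathrm{P\Gamma L}(3,q^n)$ maps $\widehat{\mathcal O}_1$ onto $\widehat{\mathcal O}_2$).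
   Context: An oval of $\mathrm{PG}(2,q)$ is a set of $q+1$ points, no three collinear. An $n$-dimensional pseudo-oval in $\mathrm{PG}(3n-1,q)$ is a set of $q^n+1$ projective $(n-1)$-dimensional subspaces any three of which span $\mathrm{PG}(3n-1,q)$. Under the identification $\mathrm{GF}(q)^{3n}\cong \mathrm{GF}(q^n)^3$, each point of $\mathrm{PG}(2,q^n)$ (a $1$-dimensional $\mathrm{GF}(q^n)$-subspace) is an $n$-dimensional $\mathrm{GF}(q)$-subspace, i.e. an $(n-1)$-dimensional subspace of $\mathrm{PG}(3n-1,q)$. The image of an oval of $\mathrm{PG}(2,q^n)$ under this correspondence is an $n$-dimensional pseudo-oval of $\mathrm{PG}(3n-1,q)$; pseudo-ovals obtained in this way are called elementary, and are said to arise from the oval. *)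

(* Defs.v *)
From HB Require Import structures.
From mathcomp Require Import all_boot all_order all_algebra.
Set Implicit Arguments. Unset Strict Implicit. Unset Printing Implicit Defensive.
Import GRing.Theory.
Local Open Scope ring_scope.

Definition pg2_point (K : finFieldType) (P : {set 'rV[K]_3}) : Prop :=
  exists2 v : 'rV[K]_3, v != 0 & P = [set c *: v | c : K].

Definition pg2_collinear (K : finFieldType) (P1 P2 P3 : {set 'rV[K]_3}) : Prop :=
  exists2 l : 'rV[K]_3, l != 0 &
    forall v, v \in P1 :|: P2 :|: P3 -> v *m l^T = 0.

Definition oval (K : finFieldType) (O : {set {set 'rV[K]_3}}) : Prop :=
  [/\ forall P, P \in O -> pg2_point P,
      #|O| = #|K|.+1 &
      forall P1 P2 P3, P1 \in O -> P2 \in O -> P3 \in O ->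
        P1 != P2 -> P1 != P3 -> P2 != P3 -> ~ pg2_collinear P1 P2 P3].

Definition gammaL_map (K : finFieldType) (m : nat)
    (f : 'rV[K]_m -> 'rV[K]_m) : Prop :=
  exists (sigma : {rmorphism K -> K}) (A : 'M[K]_m),
    [/\ bijective sigma, A \in unitmx & forall v, f v = map_mx sigma v *m A].

Definition proj_equiv (K : finFieldType) (m : nat)
    (O1 O2 : {set {set 'rV[K]_m}}) : Prop :=
  exists2 f : 'rV[K]_m -> 'rV[K]_m, gammaL_map f &
    [set f @: (P : {set 'rV[K]_m}) | P in O1] = O2.

Definition identification (F L : finFieldType) (iota : {rmorphism F -> L})
    (n : nat) (phi : 'rV[L]_3 -> 'rV[F]_(3 * n)) : Prop :=
  bijective phi /\
  forall (a : F) (u v : 'rV[L]_3), phi (iota a *: u + v) = a *: phi u + phi v.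

Definition elementary_pseudo_oval (F L : finFieldType) (n : nat)
    (phi : 'rV[L]_3 -> 'rV[F]_(3 * n)) (O : {set {set 'rV[L]_3}}) :
    {set {set 'rV[F]_(3 * n)}} :=
  [set phi @: (P : {set 'rV[L]_3}) | P in O].

(* Main.v *)
Require Import Defs.
From HB Require Import structures.
From mathcomp Require Import all_boot all_order all_algebra all_field.
From mathcomp Require Import zify ring.
Import GRing.Theory.
Set Implicit Arguments. Unset Strict Implicit. Unset Printing Implicit Defensive.
Local Open Scope ring_scope.

Definition rmfun (K : pzRingType) (s : K -> K)
  (H : {morph s : x y / x - y} /\ ((s 1 = 1) * {morph s : x y / x * y})) : K -> K := s.
HB.instance Definition _ (K : pzRingType) (s : K -> K) (H : {morph s : x y / x - y} /\ ((s 1 = 1) * {morph s : x y / x * y})) := GRing.isZmodMorphism.Build K K (@rmfun K s H) (proj1 H).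
HB.instance Definition _ (K : pzRingType) (s : K -> K) (H : {morph s : x y / x - y} /\ ((s 1 = 1) * {morph s : x y / x * y})) := GRing.isMonoidMorphism.Build K K (@rmfun K s H) (proj2 H).

Lemma scalev_inj (K : fieldType) m (v : 'rV[K]_m) c d : v != 0 -> c *: v = d *: v -> c = d.
Proof.
move=> hv /eqP; rewrite -subr_eq0 -scalerBl scaler_eq0 (negbTE hv) orbF subr_eq0.
by move/eqP.
Qed.

Lemma self_add0 (V : zmodType) (x : V) : x = x + x -> x = 0.
Proof. by move=> h; apply: (addrI x); rewrite addr0 -h. Qed.

Lemma nz_row (K : fieldType) m n (A : 'M[K]_(m, n)) : A != 0 -> exists i, row i A != 0.
Proof.
move=> hA; apply/existsP; apply: contraR hA; rewrite negb_exists => /forallP h.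
apply/eqP/row_matrixP => i; rewrite row0; exact/eqP/negbNE/h.
Qed.

Lemma gammaL_of (K : finFieldType) m (f : 'rV[K]_m -> 'rV[K]_m) (s : K -> K) :
  (0 < m)%N -> injective f ->
  (forall c x y, f (c *: x + y) = s c *: f x + f y) ->
  {morph s : x y / x + y} -> {morph s : x y / x * y} -> s 1 = 1 ->
  gammaL_map f.
Proof.
move=> m0 finj fsl sD sM s1.
have f0 : f 0 = 0.
  apply: self_add0; have := fsl 1 0 0; rewrite scaler0 addr0 s1 scale1r; exact.
have fD x y : f (x + y) = f x + f y by have := fsl 1 x y; rewrite s1 !scale1r.
have fZ c x : f (c *: x) = s c *: f x by rewrite -(addr0 (c *: x)) fsl f0 addr0.
have s0 : s 0 = 0.
  apply: self_add0; have := sD 0 0; rewrite addr0; exact.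
have sB : {morph s : x y / x - y}.
  move=> x y; have := sD (x - y) y; rewrite subrK => ->; by rewrite addrK.
have sinj : injective s.
  move=> a b hab; pose e : 'rV[K]_m := 'e_(Ordinal m0).
  have he : e != 0.
    apply/eqP => /rowP /(_ (Ordinal m0)); rewrite !mxE eqxx /=; apply/eqP; exact: oner_neq0.
  apply: (@scalev_inj K m e a b he); apply: finj; by rewrite !fZ hab.
have H : {morph s : x y / x - y} /\ ((s 1 = 1) * {morph s : x y / x * y}) by split.
exists (@rmfun K s H); exists (\matrix_(i < m) f 'e_i).
have fE v : f v = map_mx s v *m \matrix_(i < m) f 'e_i.
  rewrite mulmx_sum_row {1}(row_sum_delta v).
  rewrite (big_morph f fD f0); apply: eq_bigr => i _.
  by rewrite fZ rowK mxE.
split => //.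
- exact: injF_bij.
- rewrite -row_free_unit -kermx_eq0; apply: contraT => hk.
  have [i hi] := nz_row hk.
  have hy : row i (kermx (\matrix_(i < m) f 'e_i)) *m (\matrix_(i < m) f 'e_i) = 0.
    by rewrite -row_mul mulmx_ker row0.
  have [g sg gs] := injF_bij sinj.
  set y := row i _ in hi hy.
  have : f (map_mx g y) = f 0.
    by rewrite fE f0 -map_mx_comp; rewrite (eq_map_mx _ gs) map_mx_id.
  move/finj => /(congr1 (map_mx s)); rewrite -map_mx_comp (eq_map_mx _ gs) map_mx_id.
  move=> hy0; have : y == 0 by rewrite hy0; apply/eqP/matrixP => a b; rewrite !mxE s0.
  by rewrite (negbTE hi).
  by [].
Qed.

Section Geo.
Variable K : finFieldType.
Implicit Types (P : {set 'rV[K]_3}) (u v : 'rV[K]_3).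

Definition mk3 (u1 u2 u3 : 'rV[K]_3) : 'M[K]_3 :=
  \matrix_(i < 3, j < 3) (if i == 0 :> nat then u1 0 j else if i == 1 :> nat then u2 0 j else u3 0 j).
Definition mkr (a b c : K) : 'rV[K]_3 :=
  \row_(j < 3) (if j == 0 :> nat then a else if j == 1 :> nat then b else c).

Lemma mkrM a b c u1 u2 u3 : mkr a b c *m mk3 u1 u2 u3 = a *: u1 + b *: u2 + c *: u3.
Proof.
apply/rowP => j; rewrite !mxE !big_ord_recl big_ord0 !mxE /=.
by rewrite addr0 addrA.
Qed.

Lemma mkr_eta (x : 'rV[K]_3) : x = mkr (x 0 0) (x 0 1) (x 0 2).
Proof.
apply/rowP => j; rewrite !mxE; case: j => [[|[|[|k]]] hk] //=.
- by congr (x _ _); apply: val_inj.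
- by congr (x _ _); apply: val_inj.
- by congr (x _ _); apply: val_inj.
Qed.

Lemma coords u1 u2 u3 v : mk3 u1 u2 u3 \in unitmx ->
  exists a b c, v = a *: u1 + b *: u2 + c *: u3.
Proof.
move=> hM; set x := v *m invmx (mk3 u1 u2 u3).
exists (x 0 0), (x 0 1), (x 0 2); rewrite -mkrM -mkr_eta /x.
by rewrite mulmxKV.
Qed.

Lemma uniq3 u1 u2 u3 a b c a' b' c' : mk3 u1 u2 u3 \in unitmx ->
  a *: u1 + b *: u2 + c *: u3 = a' *: u1 + b' *: u2 + c' *: u3 ->
  [/\ a = a', b = b' & c = c'].
Proof.
move=> hM; rewrite -!mkrM => /(can_inj (mulmxK hM)) e.
have e0 := congr1 (fun x : 'rV[K]_3 => x 0 0) e.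
have e1 := congr1 (fun x : 'rV[K]_3 => x 0 1) e.
have e2 := congr1 (fun x : 'rV[K]_3 => x 0 2) e.
by move: e0 e1 e2; rewrite !mxE /=.
Qed.

Lemma pt_rep P v : pg2_point P -> v \in P -> v != 0 -> P = [set c *: v | c : K].
Proof.
case=> w hw ->; case/imsetP => c _ ->.
rewrite scaler_eq0 negb_or => /andP[hc _].
apply/setP => u; apply/imsetP/imsetP => [[d _ ->]|[d _ ->]].
- by exists (d / c) => //; rewrite scalerA mulfVK.
- by exists (d * c) => //; rewrite scalerA.
Qed.

Lemma pt_mem P : pg2_point P -> exists2 v, v \in P & v != 0.
Proof. by case=> w hw ->; exists w => //; apply/imsetP; exists 1; rewrite ?scale1r. Qed.

Lemma pt_scale P v c : pg2_point P -> v \in P -> c *: v \in P.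
Proof. by case=> w hw -> /imsetP [d _ ->]; rewrite scalerA; apply: imset_f. Qed.

Lemma coll_wit P1 P2 P3 u1 u2 u3 (l : 'rV[K]_3) :
  pg2_point P1 -> pg2_point P2 -> pg2_point P3 ->
  u1 \in P1 -> u2 \in P2 -> u3 \in P3 -> u1 != 0 -> u2 != 0 -> u3 != 0 ->
  l != 0 -> u1 *m l^T = 0 -> u2 *m l^T = 0 -> u3 *m l^T = 0 ->
  pg2_collinear P1 P2 P3.
Proof.
move=> p1 p2 p3 m1 m2 m3 n1 n2 n3 hl e1 e2 e3; exists l => // v.
rewrite !inE (pt_rep p1 m1 n1) (pt_rep p2 m2 n2) (pt_rep p3 m3 n3).
by case/orP => [/orP[]|] /imsetP [c _ ->]; rewrite -scalemxAl ?e1 ?e2 ?e3 scaler0.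
Qed.

Lemma coll_coord u1 u2 u3 (c0 c1 c2 : K) : mk3 u1 u2 u3 \in unitmx ->
  mkr c0 c1 c2 != 0 ->
  exists2 l : 'rV[K]_3, l != 0 & forall a b d, a * c0 + b * c1 + d * c2 = 0 ->
     (a *: u1 + b *: u2 + d *: u3) *m l^T = 0.
Proof.
move=> hM hc; exists ((invmx (mk3 u1 u2 u3)) *m (mkr c0 c1 c2)^T)^T.
  apply: contra hc; rewrite trmx_eq0 => /eqP h.
  have := congr1 (mulmx (mk3 u1 u2 u3)) h.
  by rewrite mulmxA mulmxV // mul1mx mulmx0 => /eqP; rewrite trmx_eq0.
move=> a b d e; rewrite trmxK -mkrM mulmxA mulmxK //.
apply/rowP => j; rewrite !mxE !big_ord_recl big_ord0 !mxE /=.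
by rewrite addr0 addrA e.
Qed.

Lemma NC (O : {set {set 'rV[K]_3}}) P1 P2 P3 u1 u2 u3 : oval O ->
  P1 \in O -> P2 \in O -> P3 \in O -> P1 != P2 -> P1 != P3 -> P2 != P3 ->
  u1 \in P1 -> u2 \in P2 -> u3 \in P3 -> u1 != 0 -> u2 != 0 -> u3 != 0 ->
  mk3 u1 u2 u3 \in unitmx.
Proof.
case=> hpt _ hnc i1 i2 i3 d12 d13 d23 m1 m2 m3 n1 n2 n3.
rewrite -unitmx_tr -row_free_unit -kermx_eq0; apply: contraT => hk.
have [i hi] := nz_row hk.
set l := row i _ in hi.
have hl : mk3 u1 u2 u3 *m l^T = 0.
  apply: trmx_inj; rewrite trmx_mul trmxK trmx0 /l -row_mul mulmx_ker row0 //.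
have hr k (hk3 : (k < 3)%N) : row (Ordinal hk3) (mk3 u1 u2 u3) *m l^T = 0.
  by rewrite -row_mul hl row0.
have r0 : row (Ordinal (isT : (0 < 3)%N)) (mk3 u1 u2 u3) = u1.
  by apply/rowP => j; rewrite !mxE.
have r1 : row (Ordinal (isT : (1 < 3)%N)) (mk3 u1 u2 u3) = u2.
  by apply/rowP => j; rewrite !mxE.
have r2 : row (Ordinal (isT : (2 < 3)%N)) (mk3 u1 u2 u3) = u3.
  by apply/rowP => j; rewrite !mxE.
case: (hnc _ _ _ i1 i2 i3 d12 d13 d23).
apply: (coll_wit (hpt _ i1) (hpt _ i2) (hpt _ i3) m1 m2 m3 n1 n2 n3 hi).
- by rewrite -r0 hr.
- by rewrite -r1 hr.
- by rewrite -r2 hr.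
Qed.

Definition coef (y w : 'rV[K]_3) : K :=
  if [pick j | w 0 j != 0] is Some j then y 0 j / w 0 j else 0.

Lemma coefP w mu : w != 0 -> coef (mu *: w) w = mu.
Proof.
rewrite /coef; case: pickP => [j hj | h0] hw.
- by rewrite mxE mulfK.
- case/negP: hw; apply/eqP/rowP => j; rewrite mxE; apply/eqP.
  by have := h0 j; move/negbFE.
Qed.

End Geo.

Lemma ex_other (T : finType) (A : {set T}) (B : seq T) :
  (size B < #|A|)%N -> exists2 x, x \in A & x \notin B.
Proof.
move=> hB; apply/exists_inP; apply: contraLR hB; rewrite negb_exists_in -leqNgt.
move=> /forall_inP hA; apply: leq_trans (card_size B).
by apply: subset_leq_card; apply/subsetP => x /hA /negbNE.
Qed.

Lemma card2_elts (K : finFieldType) : #|K| = 2 -> forall c : K, c = 0 \/ c = 1.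
Proof.
move=> h2 c; have : [set 0; 1] = [set: K].
  apply/eqP; rewrite eqEcard subsetT cardsT cards2 h2.
  by rewrite eq_sym oner_neq0.
move/setP/(_ c); rewrite !inE => /orP[/eqP|/eqP]; auto.
Qed.

Lemma coll_contra (K : finFieldType) (O : {set {set 'rV[K]_3}}) P1 P2 P3 u1 u2 u3 (l : 'rV[K]_3) :
  oval O -> P1 \in O -> P2 \in O -> P3 \in O -> P1 != P2 -> P1 != P3 -> P2 != P3 ->
  u1 \in P1 -> u2 \in P2 -> u3 \in P3 -> u1 != 0 -> u2 != 0 -> u3 != 0 ->
  l != 0 -> u1 *m l^T = 0 -> u2 *m l^T = 0 -> u3 *m l^T = 0 -> False.
Proof.
case=> hpt _ hnc i1 i2 i3 d12 d13 d23 m1 m2 m3 n1 n2 n3 hl e1 e2 e3.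
apply: (hnc _ _ _ i1 i2 i3 d12 d13 d23).
exact: (coll_wit (hpt _ i1) (hpt _ i2) (hpt _ i3) m1 m2 m3 n1 n2 n3 hl e1 e2 e3).
Qed.

Section Semi.
Variable K : finFieldType.
Variable h : 'rV[K]_3 -> 'rV[K]_3.
Hypothesis hadd : forall x y, h (x + y) = h x + h y.
Hypothesis hinj : injective h.
Variables O1 O2 : {set {set 'rV[K]_3}}.
Hypothesis hO1 : oval O1.
Hypothesis hO2 : oval O2.
Hypothesis himg : [set h @: (P : {set 'rV[K]_3}) | P in O1] = O2.
Implicit Types (P : {set 'rV[K]_3}) (u v : 'rV[K]_3).

Lemma h0 : h 0 = 0.
Proof. apply: self_add0; have := hadd 0 0; rewrite addr0; exact. Qed.

Lemma hnz v : v != 0 -> h v != 0.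
Proof. by apply: contra => /eqP e; apply/eqP; apply: hinj; rewrite e h0. Qed.

Lemma hpt P : P \in O1 -> pg2_point P.
Proof. by case: hO1 => pt _ _; apply: pt. Qed.

Lemma himO2 P : P \in O1 -> h @: P \in O2.
Proof. by move=> hP; rewrite -himg; apply: imset_f. Qed.

Lemma linepres P u : P \in O1 -> u \in P -> u != 0 ->
  forall l, exists mu, h (l *: u) = mu *: h u.
Proof.
move=> hP hu nu l.
have q2 : pg2_point (h @: P) by case: hO2 => pt _ _; exact: pt _ (himO2 hP).
have : h (l *: u) \in h @: P by apply: imset_f; exact: pt_scale (hpt hP) hu.
rewrite (pt_rep q2 (imset_f h hu) (hnz nu)) => /imsetP [mu _ ->]; by exists mu.
Qed.

Definition sc u l := coef (h (l *: u)) (h u).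

Lemma scP P u : P \in O1 -> u \in P -> u != 0 -> forall l, h (l *: u) = sc u l *: h u.
Proof.
move=> hP hu nu l; rewrite /sc; have [mu ->] := linepres hP hu nu l.
by rewrite coefP // hnz.
Qed.

Lemma semilin : exists s : K -> K,
  [/\ {morph s : x y / x + y}, {morph s : x y / x * y}, s 1 = 1 &
      forall c v, h (c *: v) = s c *: h v].
Proof.
have [K2|K3] : #|K| = 2 \/ (2 < #|K|)%N.
  have := card_finNzRing_gt1 K; rewrite leq_eqVlt => /orP[/eqP <-|]; by auto.
  exists id; split => // c v; case: (card2_elts K2 c) => ->.
  - by rewrite !scale0r h0.
  - by rewrite !scale1r.
case: (hO1) => hpt1 hcard1 hnc1.
have [P1 i1 _] : exists2 x, x \in O1 & x \notin ([::] : seq {set 'rV[K]_3}) by apply: ex_other; rewrite hcard1 /=; lia.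
have [P2 i2] : exists2 x, x \in O1 & x \notin ([:: P1] : seq {set 'rV[K]_3}) by apply: ex_other; rewrite hcard1 /= ltnS (ltnW (ltnW K3)).
rewrite !inE => d21.
have [P3 i3] : exists2 x, x \in O1 & x \notin ([:: P1; P2] : seq {set 'rV[K]_3}) by apply: ex_other; rewrite hcard1 /= ltnS (ltnW K3).
rewrite !inE negb_or => /andP[d31 d32].
have [P4 i4] : exists2 x, x \in O1 & x \notin ([:: P1; P2; P3] : seq {set 'rV[K]_3}) by apply: ex_other; rewrite hcard1 /= ltnS K3.
rewrite !inE !negb_or => /andP[d41 /andP[d42 d43]].
have d12 : P1 != P2 by rewrite eq_sym.
have d13 : P1 != P3 by rewrite eq_sym.
have d23 : P2 != P3 by rewrite eq_sym.
have d14 : P1 != P4 by rewrite eq_sym.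
have d24 : P2 != P4 by rewrite eq_sym.
have d34 : P3 != P4 by rewrite eq_sym.
have [v1 m1 n1] := pt_mem (hpt1 _ i1).
have [v2 m2 n2] := pt_mem (hpt1 _ i2).
have [v3 m3 n3] := pt_mem (hpt1 _ i3).
have [v4 m4 n4] := pt_mem (hpt1 _ i4).
have hM := NC hO1 i1 i2 i3 d12 d13 d23 m1 m2 m3 n1 n2 n3.
have [a [b [c e4]]] := coords v4 hM.
have E1 : v1 = 1 *: v1 + 0 *: v2 + 0 *: v3 by rewrite !scale0r scale1r !addr0.
have E2 : v2 = 0 *: v1 + 1 *: v2 + 0 *: v3 by rewrite !scale0r scale1r addr0 add0r.
have E3 : v3 = 0 *: v1 + 0 *: v2 + 1 *: v3 by rewrite !scale0r scale1r !add0r.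
have mkr_nz0 (x y z : K) : x != 0 -> mkr x y z != 0.
  by move=> hx; apply: contra hx => /eqP/rowP/(_ 0); rewrite !mxE /= => ->.
have mkr_nz1 (x y z : K) : y != 0 -> mkr x y z != 0.
  by move=> hx; apply: contra hx => /eqP/rowP/(_ 1); rewrite !mxE /= => ->.
have mkr_nz2 (x y z : K) : z != 0 -> mkr x y z != 0.
  by move=> hx; apply: contra hx => /eqP/rowP/(_ 2); rewrite !mxE /= => ->.
have na : a != 0.
  apply/negP => /eqP a0.
  have [l hl hlP] := coll_coord hM (mkr_nz0 1 0 0 (oner_neq0 K)).
  apply: (coll_contra hO1 i2 i3 i4 d23 d24 d34 m2 m3 m4 n2 n3 n4 hl).
  - by rewrite E2 hlP //; rewrite ?mulr1; ring.
  - by rewrite E3 hlP //; rewrite ?mulr1; ring.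
  - by rewrite e4 hlP //; rewrite ?a0; ring.
have nb : b != 0.
  apply/negP => /eqP b0.
  have [l hl hlP] := coll_coord hM (mkr_nz1 0 1 0 (oner_neq0 K)).
  apply: (coll_contra hO1 i1 i3 i4 d13 d14 d34 m1 m3 m4 n1 n3 n4 hl).
  - by rewrite E1 hlP //; rewrite ?mulr1; ring.
  - by rewrite E3 hlP //; rewrite ?mulr1; ring.
  - by rewrite e4 hlP //; rewrite ?b0; ring.
have nc : c != 0.
  apply/negP => /eqP c0.
  have [l hl hlP] := coll_coord hM (mkr_nz2 0 0 1 (oner_neq0 K)).
  apply: (coll_contra hO1 i1 i2 i4 d12 d14 d24 m1 m2 m4 n1 n2 n4 hl).
  - by rewrite E1 hlP //; rewrite ?mulr1; ring.
  - by rewrite E2 hlP //; rewrite ?mulr1; ring.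
  - by rewrite e4 hlP //; rewrite ?c0; ring.
pose p1 := a *: v1; pose p2 := b *: v2; pose p3 := c *: v3.
have mp1 : p1 \in P1 by apply: pt_scale (hpt1 _ i1) m1.
have mp2 : p2 \in P2 by apply: pt_scale (hpt1 _ i2) m2.
have mp3 : p3 \in P3 by apply: pt_scale (hpt1 _ i3) m3.
have np1 : p1 != 0 by rewrite scaler_eq0 negb_or na.
have np2 : p2 != 0 by rewrite scaler_eq0 negb_or nb.
have np3 : p3 != 0 by rewrite scaler_eq0 negb_or nc.
have e4' : v4 = p1 + p2 + p3 by [].
clearbody p1 p2 p3.
have hM' := NC hO1 i1 i2 i3 d12 d13 d23 mp1 mp2 mp3 np1 np2 np3.
have hinjS := imset_inj hinj.
have dd (X Y : {set 'rV[K]_3}) : X != Y -> h @: X != h @: Y.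
  by apply: contra => /eqP /hinjS ->.
have hW := NC hO2 (himO2 i1) (himO2 i2) (himO2 i3) (dd _ _ d12) (dd _ _ d13) (dd _ _ d23)
  (imset_f h mp1) (imset_f h mp2) (imset_f h mp3) (hnz np1) (hnz np2) (hnz np3).
pose s := sc p1.
have sp1 l : h (l *: p1) = s l *: h p1 := scP i1 mp1 np1 l.
have sp2 := scP i2 mp2 np2.
have sp3 := scP i3 mp3 np3.
have sp4 := scP i4 m4 n4.
have s4 l : [/\ s l = sc v4 l, sc p2 l = sc v4 l & sc p3 l = sc v4 l].
  apply: (uniq3 hW).
  by rewrite -(sp1 l) -sp2 -sp3 -!scalerDr -!hadd -!scalerDr -e4' sp4 e4'.
have sp2' l : h (l *: p2) = s l *: h p2.
  by rewrite sp2; case: (s4 l) => -> -> _.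
have sp3' l : h (l *: p3) = s l *: h p3.
  by rewrite sp3; case: (s4 l) => -> _ ->.
have hlin x y z : h (x *: p1 + y *: p2 + z *: p3) = s x *: h p1 + s y *: h p2 + s z *: h p3.
  by rewrite !hadd sp1 sp2' sp3'.
have w1nz := hnz np1.
have sD : {morph s : x y / x + y}.
  move=> x y; have e : s (x + y) *: h p1 = (s x + s y) *: h p1.
    by rewrite -sp1 !scalerDl hadd -!sp1.
  exact: scalev_inj w1nz e.
have s1 : s 1 = 1.
  rewrite /s /sc scale1r.
  by rewrite -[X in coef X _](scale1r (h p1)) coefP.
have s0 : s 0 = 0.
  apply: self_add0; have := sD 0 0; rewrite addr0; exact.
have sN x : s (- x) = - s x.
  apply: (addrI (s x)); by rewrite -sD !subrr s0.
have norm R r x y : R \in O1 -> r \in R -> r = p1 + x *: p2 + y *: p3 ->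
    forall l, s (l * x) = s l * s x /\ s (l * y) = s l * s y.
  move=> iR mr er l.
  have nr : r != 0.
    apply/eqP => r0.
    have : 1 *: p1 + x *: p2 + y *: p3 = 0 *: p1 + 0 *: p2 + 0 *: p3.
      by rewrite scale1r -er r0 !scale0r !addr0.
    by case/(uniq3 hM') => /eqP; rewrite oner_eq0.
  have [mu emu] := linepres iR mr nr l.
  have : s l *: h p1 + s (l * x) *: h p2 + s (l * y) *: h p3 =
         mu *: h p1 + (mu * s x) *: h p2 + (mu * s y) *: h p3.
    have e1 : h (l *: r) = s l *: h p1 + s (l * x) *: h p2 + s (l * y) *: h p3.
      by rewrite er !scalerDr !scalerA hlin.
    have e2 : h r = h p1 + s x *: h p2 + s y *: h p3.
      by rewrite er -{1}(scale1r p1) hlin s1 scale1r.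
    by rewrite -e1 emu e2 !scalerDr !scalerA.
  by case/(uniq3 hW) => -> -> ->.
pose S := [set x : K | [forall l, s (l * x) == s l * s x]].
have SP x : reflect (forall l, s (l * x) = s l * s x) (x \in S).
  rewrite inE; apply: (iffP forallP) => H l; first exact/eqP/H.
  exact/eqP/H.
have S0 : 0 \in S by apply/SP => l; rewrite mulr0 s0 mulr0.
have S1 : 1 \in S by apply/SP => l; rewrite mulr1 s1 mulr1.
have SD x y : x \in S -> y \in S -> x + y \in S.
  move=> /SP hx /SP hy; apply/SP => l; by rewrite mulrDr !sD hx hy mulrDr.
have SN x : x \in S -> - x \in S.
  move=> /SP hx; apply/SP => l; by rewrite mulrN !sN hx mulrN.
have SM x y : x \in S -> y \in S -> x * y \in S.
  move=> /SP hx /SP hy; apply/SP => l.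
  by rewrite mulrA hy hx (hy x) mulrA.
have SX x n : x \in S -> x ^+ n \in S.
  move=> hx; elim: n => [|n IH]; first by rewrite expr0.
  by rewrite exprS SM.
have SV x : x \in S -> x^-1 \in S.
  move=> hx; have [->|nx] := eqVneq x 0; first by rewrite invr0.
  have e : x ^-1 = x ^+ (#|K|.-2).
    have ex : x ^+ (#|K|.-2).+1 = 1.
      apply: (mulIf nx); rewrite mul1r -exprSr.
      have -> : (#|K|.-2).+2 = #|K|.
        by have := card_finNzRing_gt1 K; case: #|K| => [|[|k]].
      exact: expf_card.
    by rewrite -[RHS](mulKf nx) -exprS ex mulr1.
  by rewrite e SX.
pose rep (R : {set 'rV[K]_3}) := odflt 0 [pick v in R | v != 0].
have repP R : R \in O1 -> rep R \in R /\ rep R != 0.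
  move=> iR; rewrite /rep; case: pickP => [v /andP[mv nv] //|none] /=.
  have [v mv nv] := pt_mem (hpt1 _ iR); by move: (none v); rewrite mv nv.
pose cf v := v *m invmx (mk3 p1 p2 p3).
have dec v : v = (cf v) 0 0 *: p1 + (cf v) 0 1 *: p2 + (cf v) 0 2 *: p3.
  by rewrite -mkrM -mkr_eta /cf mulmxKV.
have cfE v x y z : v = x *: p1 + y *: p2 + z *: p3 ->
    [/\ cf v 0 0 = x, cf v 0 1 = y & cf v 0 2 = z].
  by move=> ev; apply: (uniq3 hM'); rewrite -dec.
have F1 : p1 = 1 *: p1 + 0 *: p2 + 0 *: p3 by rewrite !scale0r scale1r !addr0.
have F2 : p2 = 0 *: p1 + 1 *: p2 + 0 *: p3 by rewrite !scale0r scale1r addr0 add0r.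
have F3 : p3 = 0 *: p1 + 0 *: p2 + 1 *: p3 by rewrite !scale0r scale1r !add0r.
pose pi R := if cf (rep R) 0 1 == 0 then None else Some (cf (rep R) 0 2 / cf (rep R) 0 1).
have claimA R : R \in O1 :\ P1 -> pi R \in None |: [set Some t | t in S].
  move=> /setD1P [nR1 iR]; have [mr nr] := repP R iR.
  have ey := dec (rep R).
  rewrite /pi; case: eqP => [_|y1]; first by rewrite !inE eqxx.
  rewrite !inE /=; apply: imset_f.
  case: (eqVneq (cf (rep R) 0 0) 0) => [y0|y0].
  - case: (eqVneq R P2) => [eR2|nR2].
      have mr2 : rep R \in P2 by rewrite -eR2.
      move: mr2; rewrite (pt_rep (hpt1 _ i2) mp2 np2) => /imsetP [d _ ed].
      have : rep R = 0 *: p1 + d *: p2 + 0 *: p3 by rewrite ed !scale0r addr0 add0r.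
      by case/cfE => _ _ ->; rewrite mul0r.
    case: (eqVneq R P3) => [eR3|nR3].
      have mr3 : rep R \in P3 by rewrite -eR3.
      move: mr3; rewrite (pt_rep (hpt1 _ i3) mp3 np3) => /imsetP [d _ ed].
      have : rep R = 0 *: p1 + 0 *: p2 + d *: p3 by rewrite ed !scale0r !add0r.
      by case/cfE => _ /y1.
    have [l hl hlP] := coll_coord hM' (mkr_nz0 1 0 0 (oner_neq0 K)).
    case: (coll_contra hO1 iR i2 i3 nR2 nR3 d23 mr mp2 mp3 nr np2 np3 hl).
    + by rewrite ey hlP //; rewrite y0; ring.
    + by rewrite F2 hlP //; ring.
    + by rewrite F3 hlP //; ring.
  - set a' := cf (rep R) 0 1 / cf (rep R) 0 0.
    set b' := cf (rep R) 0 2 / cf (rep R) 0 0.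
    have er : (cf (rep R) 0 0)^-1 *: rep R = p1 + a' *: p2 + b' *: p3.
      rewrite [X in _ *: X = _]ey !scalerDr !scalerA mulVf // scale1r /a' /b'.
      by rewrite [_^-1 * cf _ 0 1]mulrC [_^-1 * cf _ 0 2]mulrC.
    have mr' := pt_scale (cf (rep R) 0 0)^-1 (hpt1 _ iR) mr.
    have aS : a' \in S by apply/SP => l; case: (norm _ _ a' b' iR mr' er l).
    have bS : b' \in S by apply/SP => l; case: (norm _ _ a' b' iR mr' er l).
    have -> : cf (rep R) 0 2 / cf (rep R) 0 1 = b' * a'^-1.
      rewrite /a' /b'; field.
      by rewrite y0 /=; apply/eqP.
    by rewrite SM // SV.
have claimB : {in O1 :\ P1 &, injective pi}.
  move=> R R' /setD1P [q1 iR] /setD1P [q1' iR'] e.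
  have q1s : P1 != R by rewrite eq_sym.
  have q1s' : P1 != R' by rewrite eq_sym.
  apply/eqP; apply: contraT => nRR'.
  have [mr nr] := repP R iR; have [mr' nr'] := repP R' iR'.
  have ey := dec (rep R); have ey' := dec (rep R').
  move: e; rewrite /pi.
  case: (eqVneq (cf (rep R) 0 1) 0) => [y1|y1];
    case: (eqVneq (cf (rep R') 0 1) 0) => [y1'|y1'] //= e.
  - have [l hl hlP] := coll_coord hM' (mkr_nz1 0 1 0 (oner_neq0 K)).
    case: (coll_contra hO1 i1 iR iR' q1s q1s' nRR' mp1 mr mr' np1 nr nr' hl).
    + by rewrite F1 hlP //; ring.
    + by rewrite ey hlP //; rewrite y1; ring.
    + by rewrite ey' hlP //; rewrite y1'; ring.
  - case: e => e.
    set t := cf (rep R) 0 2 / cf (rep R) 0 1.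
    have nt : mkr 0 t (-1) != 0 by apply: mkr_nz2; rewrite oppr_eq0 oner_eq0.
    have [l hl hlP] := coll_coord hM' nt.
    case: (coll_contra hO1 i1 iR iR' q1s q1s' nRR' mp1 mr mr' np1 nr nr' hl).
    + by rewrite F1 hlP //; ring.
    + by rewrite ey hlP //; rewrite /t; field.
    + by rewrite ey' hlP //; rewrite /t e; field.
have cardD : #|O1 :\ P1| = #|K|.
  by have := cardsD1 P1 O1; rewrite i1 hcard1 add1n => -[->].
have le1 : (#|K| <= 1 + #|S|)%N.
  rewrite -cardD -(card_in_imset claimB).
  apply: (@leq_trans #|None |: [set Some t | t in S]|).
    apply: subset_leq_card; apply/subsetP => o /imsetP [R hR ->]; exact: claimA.
  rewrite cardsU1 card_imset; last by move=> x y [].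
  by rewrite leq_add2r leq_b1.
have ST x : x \in S.
  apply: contraT => nx.
  have le2 : (#|S| + #|S| <= #|K|)%N.
    rewrite -(cardsC S) leq_add2l.
    have <- : #|[set t + x | t in S]| = #|S| by apply: card_imset => u w /addIr.
    apply: subset_leq_card; apply/subsetP => z /imsetP [t tS ->]; rewrite inE.
    apply: contra nx => htx.
    have -> : x = (t + x) + - t by rewrite addrC addKr.
    by rewrite SD // SN.
  have ge2 : (2 <= #|S|)%N.
    have <- : #|[set (0 : K); 1]| = 2%N by rewrite cards2 eq_sym oner_neq0.
    apply: subset_leq_card; apply/subsetP => z /set2P [] ->; [exact: S0 | exact: S1].
  by have := leq_trans le2 le1; rewrite leq_add2r => /(leq_trans ge2).
have sM : {morph s : x y / x * y}.
  by move=> x y; have /SP := ST y; apply.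
exists s; split => // l v.
rewrite (dec v) !scalerDr !scalerA !hlin !sM !scalerDr !scalerA.
by [].
Qed.
End Semi.

Lemma sub_stable (F L : finFieldType) (iota : {rmorphism F -> L})
  (sigma : {rmorphism L -> L}) a : exists b, iota b = sigma (iota a).
Proof.
set q := #|F|.
have q1 : (1 < q)%N := card_finNzRing_gt1 F.
pose R := [set x : L | x ^+ q == x].
have sub : iota @: setT \subset R.
  by apply/subsetP => _ /imsetP [b _ ->]; rewrite inE -rmorphXn expf_card.
have cR : (#|R| <= q)%N.
  pose p : {poly L} := 'X^q - 'X.
  have sp : size p = q.+1.
    by rewrite /p size_polyDl ?size_polyXn // size_polyN size_polyX ltnS.
  have pn0 : p != 0 by rewrite -size_poly_eq0 sp.
  have := @max_poly_roots _ p (enum R) pn0.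
  rewrite sp -cardE ltnS; apply; last exact: enum_uniq.
  apply/allP => x; rewrite mem_enum inE => /eqP hx.
  by rewrite /root /p !hornerE hx subrr.
have eqR : iota @: setT = R.
  apply/eqP; rewrite eqEcard sub /= card_imset ?cardsT //; exact: fmorph_inj.
have : sigma (iota a) \in R by rewrite inE -!rmorphXn expf_card.
by rewrite -eqR => /imsetP [b _ ->]; exists b.
Qed.

Unset Implicit Arguments.

Theorem proposition1 (F L : finFieldType) (iota : {rmorphism F -> L}) (n : nat)
  (hn : (0 < n)%N) (hL : #|L| = (#|F| ^ n)%N)
  (phi : 'rV[L]_3 -> 'rV[F]_(3 * n)) (hphi : identification iota phi)
  (O1 O2 : {set {set 'rV[L]_3}}) (hO1 : oval O1) (hO2 : oval O2) :
  proj_equiv (elementary_pseudo_oval phi O1) (elementary_pseudo_oval phi O2)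
  <-> proj_equiv O1 O2.
Proof.
case: hphi => [[psi hpp hpp'] hlin].
have phiD u v : phi (u + v) = phi u + phi v by have := hlin 1 u v; rewrite rmorph1 !scale1r.
have psiL c w w' : psi (c *: w + w') = iota c *: psi w + psi w'.
  by apply: (can_inj hpp); rewrite hlin !hpp'.
have psiD w w' : psi (w + w') = psi w + psi w'.
  by have := psiL 1 w w'; rewrite rmorph1 !scale1r.
rewrite /elementary_pseudo_oval; split.
- case=> g [tau [B [btau hB hg]]] himg.
  pose h := fun x => psi (g (phi x)).
  have gD x y : g (x + y) = g x + g y by rewrite !hg map_mxD mulmxDl.
  have ginj : injective g.
    by move=> x y; rewrite !hg => /(can_inj (mulmxK hB)) /map_mx_inj.
  have hadd x y : h (x + y) = h x + h y by rewrite /h phiD gD psiD.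
  have hinj : injective h.
    by move=> x y /(can_inj hpp') /ginj /(can_inj hpp).
  have himg' : [set h @: (P : {set 'rV[L]_3}) | P in O1] = O2.
    have -> : [set h @: (P : {set 'rV[L]_3}) | P in O1] =
      [set psi @: (X : {set 'rV[F]_(3 * n)}) | X in [set g @: (Y : {set 'rV[F]_(3 * n)}) | Y in [set phi @: (P : {set 'rV[L]_3}) | P in O1]]].
      by rewrite -!imset_comp; apply: eq_imset => P /=; rewrite -!imset_comp.
    rewrite himg -imset_comp -[RHS]imset_id; apply: eq_imset => P /=.
    by rewrite -imset_comp -[RHS]imset_id; apply: eq_imset => x /=; rewrite hpp.
  have [s [sD sM s1 sZ]] := semilin hadd hinj hO1 hO2 himg'.
  exists h => //; apply: (gammaL_of (s := s)) => // c x y.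
  by rewrite hadd sZ.
- case=> f [sigma [A [bs hA hf]]] himg.
  pose tau a := odflt 0 [pick b | iota b == sigma (iota a)].
  have tauP a : iota (tau a) = sigma (iota a).
    rewrite /tau; case: pickP => [b /eqP //|none].
    have [b hb] := sub_stable iota sigma a; by move: (none b); rewrite hb eqxx.
  have iinj := fmorph_inj iota.
  have fL c u v : f (c *: u + v) = sigma c *: f u + f v.
    by rewrite !hf map_mxD map_mxZ mulmxDl scalemxAl.
  have finj : injective f.
    by move=> x y; rewrite !hf => /(can_inj (mulmxK hA)) /map_mx_inj.
  pose g := fun w => phi (f (psi w)).
  have gL c x y : g (c *: x + y) = tau c *: g x + g y.
    by rewrite /g psiL fL -tauP hlin.
  have ginj : injective g.
    by move=> x y /(can_inj hpp) /finj /(can_inj hpp').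
  exists g.
    apply: (gammaL_of (s := tau) _ ginj gL).
    - by rewrite muln_gt0 hn.
    - by move=> x y; apply: iinj; rewrite !rmorphD !tauP !rmorphD.
    - by move=> x y; apply: iinj; rewrite !rmorphM !tauP !rmorphM.
    - by apply: iinj; rewrite tauP !rmorph1.
  rewrite -himg -imset_comp -imset_comp; apply: eq_imset => P /=.
  by rewrite -!imset_comp; apply: eq_imset => x /=; rewrite /g hpp.
Qed.
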